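(* Let $d\ge 1$ and let $\mathcal{G}'$ be a $d$-tree decomposition with $\mathcal{G}'\neq\mathcal{K}_1$. Then there exists a $d$-tree decomposition $\mathcal{G}$ such that $\mathcal{G}'$ is obtained from $\mathcal{G}$ by a $d$-tree $j$-extension for some $0\le j\le d-1$.
   Context: A multi-graph is finite and loop-free, possibly with parallel edges. A $d$-tree decomposition is a tuple $\mathcal{G}=(G;T_1,\ldots,T_d)$ where $G$ is a multi-graph and $T_1,\ldots,T_d$ are spanning trees of $G$ whose edge sets partition $E(G)$ (distinct parallel edges are distinct edges). By convention, $\mathcal{K}_1=(K_1;T_1,\ldots,T_d)$, where $K_1$ is the graph with one vertex and no edges and all $T_i$ are edgeless, is a $d$-tree decomposition. For a multi-graph $G$, a $d$-dimensional $j$-extension forms $G'$ by deleting a set $F$ of $j$ edges of $G$ and adding a new vertex $v$ together with $d+j$ new edges joining $v$ to vertices of $G$ (parallel new edges allowed), such that every endpoint of an edge of $F$ is a neighbour of $v$ in $G'$ (for $d=1$ any $j\ge0$ is allowed). A $d$-tree decomposition $\mathcal{G}'=(G';T_1',\ldots,T_d')$ is obtained from $\mathcal{G}=(G;T_1,\ldots,T_d)$ by a $d$-tree $j$-extension ($0\le j\le d-1$) if $G'$ is obtained from $G$ by a $d$-dimensional $j$-extension adding a new vertex $v$, and for each $i$, $T_i'$ is obtained from $T_i$ by a $1$-dimensional $k_i$-extension adding the same vertex $v$, for some $0\le k_i\le d-1$ (so $\sum_i k_i=j$). *)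

(* Defs.v *)
From mathcomp Require Import all_boot.
Set Implicit Arguments. Unset Strict Implicit. Unset Printing Implicit Defensive.

(* A multi-graph on a vertex set [Vs : {set V}] is given by a list of edges;
   distinct positions in the list are distinct edges (so parallel edges are
   allowed).  An edge (a,b) is an unordered pair; its orientation in the list
   is irrelevant.  Coloured edges [((a,b),i)] record the tree [T_i] the edge
   belongs to, so a list of coloured edges is a multigraph together with a
   partition of its edge set into d classes. *)

Definition cedge (V : finType) (d : nat) := ((V * V) * 'I_d)%type.

Definition adj (V : finType) (E : seq (V * V)) : rel V :=
  fun a b => ((a, b) \in E) || ((b, a) \in E).

Definition is_multigraph (V : finType) (Vs : {set V}) (E : seq (V * V)) : Prop :=
  forall e, e \in E -> [/\ e.1 \in Vs, e.2 \in Vs & e.1 != e.2].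

Definition mconnected (V : finType) (Vs : {set V}) (E : seq (V * V)) : Prop :=
  Vs != set0 /\ forall x y, x \in Vs -> y \in Vs -> connect (adj E) x y.

(* A tree: a connected multigraph that is minimally connected, i.e. deleting
   any single edge (one copy, if parallel) disconnects it (equivalently: a
   connected multigraph without cycles, 2-cycles of parallel edges included). *)
Definition is_tree (V : finType) (Vs : {set V}) (E : seq (V * V)) : Prop :=
  [/\ is_multigraph Vs E, mconnected Vs E &
      forall e, e \in E -> ~ mconnected Vs (rem e E)].

Definition colour_class (V : finType) (d : nat) (E : seq (cedge V d)) (i : 'I_d)
  : seq (V * V) := [seq e.1 | e <- E & e.2 == i].

Definition is_dtd (d : nat) (V : finType) (Vs : {set V}) (E : seq (cedge V d)) : Prop :=
  is_multigraph Vs [seq e.1 | e <- E] /\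
  forall i : 'I_d, is_tree Vs (colour_class E i).

Definition is_K1 (d : nat) (V : finType) (Vs : {set V}) (E : seq (cedge V d)) : Prop :=
  #|Vs| = 1 /\ E = [::].

Definition ends (V : finType) (e : V * V) : seq V := [:: e.1; e.2].

(* (Vs', E') is obtained from (Vs, E) by a d-tree j-extension adding vertex v:
   - Vs' = Vs + v with v new;
   - E = F ++ R as multisets (F, the |F| = j deleted edges), and
     E' = R ++ N as multisets, where N are the d+j new edges, each joining v to
     a vertex of G;
   - for each colour i, T_i' arises from T_i by a 1-dimensional k_i-extension
     adding v: k_i = #(F of colour i) <= d-1 edges deleted, 1 + k_i new edges
     of colour i added at v, and every endpoint of a deleted edge of colour i is
     a neighbour of v in T_i' (via a new edge of colour i).
   Summing over colours gives |N| = d + j and the neighbour condition for G'. *)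
Definition dtree_ext (d j : nat) (V : finType)
  (Vs : {set V}) (E : seq (cedge V d)) (Vs' : {set V}) (E' : seq (cedge V d)) : Prop :=
  exists (v : V) (F R N : seq (cedge V d)),
  [/\ v \notin Vs /\ Vs' = v |: Vs,
      perm_eq E (F ++ R) /\ perm_eq E' (R ++ N),
      size F = j /\ size N = d + j,
      (forall e, e \in N ->
         (e.1.1 == v /\ e.1.2 \in Vs) \/ (e.1.2 == v /\ e.1.1 \in Vs)) &
      forall i : 'I_d,
        [/\ size (colour_class F i) <= d - 1,
            size (colour_class N i) = (size (colour_class F i)).+1 &
            forall u, u \in flatten [seq ends e | e <- colour_class F i] ->
              u \in flatten [seq ends e | e <- colour_class N i]]].

(* Main.v *)
Require Import Defs.
From mathcomp Require Import all_boot zify.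
Set Implicit Arguments. Unset Strict Implicit. Unset Printing Implicit Defensive.

Section G.
Variable V : finType.
Implicit Types (E : seq (V * V)) (S : {set V}).

Lemma adj_sym E : symmetric (adj E).
Proof. by move=> a b; rewrite /adj orbC. Qed.

Lemma connectC E x y : connect (adj E) x y = connect (adj E) y x.
Proof. exact: (sym_connect_sym (@adj_sym E)). Qed.

Lemma adj_mono E1 E2 : {subset E1 <= E2} -> forall x y, adj E1 x y -> adj E2 x y.
Proof. by move=> s x y; rewrite /adj => /orP[/s->|/s->] //; rewrite orbT. Qed.

Lemma connect_mono E1 E2 : {subset E1 <= E2} ->
  forall x y, connect (adj E1) x y -> connect (adj E2) x y.
Proof.
move=> s; apply: connect_sub => x y /(adj_mono s) h; exact: connect1.
Qed.

Definition forest E := forall e, e \in E -> ~~ connect (adj (rem e E)) e.1 e.2.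

Lemma adj_rem E e x y : e \in E -> connect (adj (rem e E)) e.1 e.2 ->
  adj E x y -> connect (adj (rem e E)) x y.
Proof.
move=> eE c; rewrite /adj => /orP[] h.
  have [xe|ne] := eqVneq (x, y) e; first by move: c; rewrite -xe.
  by apply: connect1; rewrite /adj (rem_mem ne h).
have [xe|ne] := eqVneq (y, x) e; first by move: c; rewrite connectC -xe.
by apply: connect1; rewrite /adj (rem_mem ne h) orbT.
Qed.

Lemma tree_forest S E : is_tree S E -> forest E.
Proof.
case=> mg [S0 conn] min e eE; apply/negP => c; apply: (min e eE); split => //.
move=> x y xS yS; apply: (connect_sub (e := adj E)); last exact: conn.
by move=> a b h; apply: adj_rem.
Qed.

Lemma forest_subseq E E' : forest E -> subseq E' E -> forest E'.
Proof.
move=> fE sub e eE'; have eE := mem_subseq sub eE'.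
apply/negP => c; move/negP: (fE e eE); apply.
apply: connect_mono c; apply: mem_subseq; exact: subseq_rem.
Qed.

Definition within S E := forall e, e \in E -> e.1 \in S /\ e.2 \in S.

Lemma forest_size n : forall S E, size E = n -> within S E -> forest E ->
  S != set0 -> (size E).+1 <= #|S|.
Proof.
elim: n {-2}n (leqnn n) => [|m IH] n.
  rewrite leqn0 => /eqP -> S E /size0nil -> _ _ S0; by rewrite card_gt0.
move=> ltn S E sE wE fE S0.
case: E sE wE fE => [|e E0'] sE wE fE; first by rewrite card_gt0.
set E := e :: E0' in sE wE fE *.
have eE : e \in E by rewrite inE eqxx.
set E0 := rem e E.
set A := [set x in S | connect (adj E0) e.1 x].
have cl : forall f, f \in E0 -> (f.1 \in A) = (f.2 \in A).
  move=> f fE0; have fEE := mem_subseq (rem_subseq e E) fE0.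
  have [h1 h2] := wE f fEE; rewrite !inE h1 h2 /=.
  by apply/idP/idP => h; apply: (connect_trans h); apply: connect1;
    rewrite /adj -surjective_pairing fE0 //= orbT.
have [e1S e2S] := wE e eE.
have e1A : e.1 \in A by rewrite inE e1S connect0.
have e2A : e.2 \notin A by rewrite inE e2S /= (fE e eE).
set EA := [seq f <- E0 | f.1 \in A].
set EB := [seq f <- E0 | f.1 \notin A].
have sE0 : size E0 = size EA + size EB.
  by rewrite !size_filter -(count_predC (fun f : V * V => f.1 \in A)).
have sEsub : forall p, subseq [seq f <- E0 | p f] E.
  move=> p; apply: subseq_trans (filter_subseq _ _) (rem_subseq _ _).
have AS : A \subset S by apply/subsetP => x; rewrite inE => /andP[].
have IHA : (size EA).+1 <= #|A|.
  apply: (IH (size EA)) => //.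
  - have : size E0 = n.-1 by rewrite /E0 size_rem // sE.
    by move=> hh; move: ltn; rewrite sE0 in hh; lia.
  - move=> f; rewrite mem_filter => /andP[f1 fE0]; split => //; by rewrite -cl.
  - exact: forest_subseq fE (sEsub _).
  - by apply/set0Pn; exists e.1.
have IHB : (size EB).+1 <= #|S :\: A|.
  apply: (IH (size EB)) => //.
  - have : size E0 = n.-1 by rewrite /E0 size_rem // sE.
    by move=> hh; move: ltn; rewrite sE0 in hh; lia.
  - move=> f; rewrite mem_filter => /andP[f1 fE0].
    have fEE := mem_subseq (rem_subseq e E) fE0.
    have [h1 h2] := wE f fEE; rewrite !in_setD h1 h2 -(cl f fE0) f1; by [].
  - exact: forest_subseq fE (sEsub _).
  - by apply/set0Pn; exists e.2; rewrite in_setD e2A e2S.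
have : #|S| = #|A| + #|S :\: A|.
  by rewrite -(cardsID A S) (setIidPr AS).
have : size E0 = (size E).-1 by rewrite /E0 size_rem.
rewrite sE0 /E /= => h1 h2.
rewrite h2; move: IHA IHB; rewrite -/E /=; lia.
Qed.


Definition inc (v : V) (e : V * V) := (e.1 == v) || (e.2 == v).
Definition oth (v : V) (e : V * V) := if e.1 == v then e.2 else e.1.
Definition nb (v : V) E := [seq oth v e | e <- E & inc v e].

Lemma oth_eq v x y : inc v x -> inc v y -> oth v x = oth v y ->
  y = x \/ y = (x.2, x.1).
Proof.
case: x y => [a b] [c e]; rewrite /inc /oth /=.
case: (eqVneq a v) => [->|av]; case: (eqVneq c v) => [->|cv] /=.
- by move=> _ _ ->; left.
- by move=> _ /eqP -> ->; right.
- by move=> /eqP -> _ ->; right.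
- by move=> /eqP -> /eqP -> ->; left.
Qed.

Lemma inc_adj s v f : f \in s -> inc v f -> adj s v (oth v f).
Proof.
case: f => a b; rewrite /inc /oth /adj /=.
by case: (eqVneq a v) => [->|av] /= fs; [rewrite fs | move/eqP=> bv; rewrite -bv fs orbT].
Qed.

Lemma nb_uniq v T : forest T -> uniq (nb v T).
Proof.
elim: T => [|x T IH] // fT.
have fT' : forest T by apply: forest_subseq fT (subseq_cons _ _).
have := IH fT'; rewrite /nb /=.
case ix: (inc v x) => /= ->; rewrite ?andbT //. apply/mapP => -[y]; rewrite mem_filter => /andP[iy yT] h.
have := fT x; rewrite inE eqxx /= eqxx => /(_ isT) /negP; apply; apply: connect1.
rewrite /adj.
case: (oth_eq ix iy h) => yx; rewrite yx in yT.
  by rewrite -surjective_pairing yT.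
by case: (x) yT => a b /= ->; rewrite orbT.
Qed.


Lemma oth_ends v h : oth v h \in ends h.
Proof. by rewrite /oth /ends; case: ifP => _; rewrite !inE eqxx ?orbT. Qed.

Lemma reach_nb v T x : x != v -> connect (adj T) x v ->
  exists2 w, w \in nb v T & connect (adj [seq e <- T | ~~ inc v e]) x w.
Proof.
move=> xv /connectP[p]; elim: p x xv => [|y p IH] x xv /=.
  by move=> _ xe; rewrite xe eqxx in xv.
move=> /andP[axy pth] lst.
have [yv|yv] := eqVneq y v.
  exists x; last exact: connect0.
  move: axy; rewrite yv /adj => /orP[] h.
    have -> : x = oth v (x, v) by rewrite /oth /= (negbTE xv).
    by apply: map_f; rewrite mem_filter h /inc /= eqxx orbT.
  have -> : x = oth v (v, x) by rewrite /oth /= eqxx.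
  by apply: map_f; rewrite mem_filter h /inc /= eqxx.
have [w wn c] := IH y yv pth lst; exists w => //.
apply: connect_trans c; apply: connect1; move: axy; rewrite /adj !mem_filter /inc /=.
by rewrite (negbTE xv) (negbTE yv).
Qed.

Lemma rem_cat_l (T : eqType) (x : T) s1 s2 : x \in s1 -> rem x (s1 ++ s2) = rem x s1 ++ s2.
Proof.
elim: s1 => [|y s1 IH] //=; rewrite inE; case: (eqVneq x y) => //= _ xs.
by rewrite (IH xs).
Qed.

Lemma rem_cat_r (T : eqType) (x : T) s1 s2 : x \notin s1 -> rem x (s1 ++ s2) = s1 ++ rem x s2.
Proof.
elim: s1 => [|y s1 IH] //=; rewrite inE negb_or eq_sym; case/andP=> /negbTE -> xs.
by rewrite (IH xs).
Qed.

Lemma nb_in S v T : is_multigraph S T -> forall w, w \in nb v T -> w \in S :\ v.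
Proof.
move=> mg w /mapP[h]; rewrite mem_filter => /andP[ih hT] ->.
have [h1 h2 h12] := mg h hT; move: ih; rewrite /inc /oth in_setD1.
case: (eqVneq h.1 v) => [hv|hv] /= _.
  by rewrite h2 andbT -hv eq_sym.
by rewrite h1 hv.
Qed.

Lemma nb_adj s v T u : u \in nb v T ->
  (forall h, h \in T -> inc v h -> oth v h = u -> h \in s) -> adj s v u.
Proof.
move=> /mapP[h]; rewrite mem_filter => /andP[ih hT] -> H.
by apply: inc_adj => //; apply: H.
Qed.


Lemma connect_edges (s s' : seq (V * V)) : (forall g, g \in s -> connect (adj s') g.1 g.2) ->
  forall a b, connect (adj s) a b -> connect (adj s') a b.
Proof.
move=> H; apply: connect_sub => a b; rewrite /adj => /orP[] /H //=.
by rewrite connectC.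
Qed.

Lemma tree_del S v T : v \in S -> S :\ v != set0 -> is_tree S T ->
  [/\ nb v T != [::], uniq (nb v T) &
   is_tree (S :\ v) ([seq (head v (nb v T), u) | u <- behead (nb v T)]
                     ++ [seq e <- T | ~~ inc v e])].
Proof.
move=> vS S0 tT; have [mg [Sn0 conn] _] := tT; have fT := tree_forest tT.
have uq := nb_uniq v fT.
have nbS := nb_in (v := v) mg.
have reach : forall x, x \in S :\ v ->
    exists2 w, w \in nb v T & connect (adj [seq e <- T | ~~ inc v e]) x w.
  move=> x; rewrite in_setD1 => /andP[xv xS]; apply: reach_nb => //; exact: conn.
have ne : nb v T != [::].
  case/set0Pn: S0 => x /reach [w wn _]; by case: (nb v T) wn.
split => //.
move: uq nbS ne; set nbT := nb v T; case en: nbT => [|u0 rest] // uq nbS _ /=.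
have u0r : u0 \notin rest by case/andP: uq.
have uqr : uniq rest by case/andP: uq.
have u0S : u0 \in S :\ v by apply: nbS; rewrite mem_head.
set Fl := [seq (u0, u) | u <- rest].
set Rl := [seq e <- T | ~~ inc v e].
have mgE : is_multigraph (S :\ v) (Fl ++ Rl).
  move=> e; rewrite mem_cat => /orP[/mapP[u ur ->]|].
    split => //=; first by apply: nbS; rewrite inE ur orbT.
    by apply/eqP => eu; rewrite eu ur in u0r.
  rewrite mem_filter /inc negb_or => /andP[/andP[e1v e2v] eT].
  by have [h1 h2 h12] := mg e eT; rewrite !in_setD1 e1v e2v h1 h2.
have fuq : uniq Fl by rewrite map_inj_uniq // => a b [].
split => //.
  split => // x y xS yS.
  suff H : forall x, x \in S :\ v -> connect (adj (Fl ++ Rl)) x u0.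
    by apply: connect_trans (H x xS) _; rewrite connectC; apply: H.
  move=> z /reach [w]; rewrite -/nbT en inE => wn c.
  apply: (connect_trans (y := w)).
    by apply: connect_mono c => g; rewrite mem_cat orbC => ->.
  case/orP: wn => [/eqP ->|wr]; first exact: connect0.
  apply: connect1; rewrite /adj !mem_cat; apply/orP; right; apply/orP; left.
  exact: (map_f (fun u => (u0, u)) wr).
move=> e eE [_ cE]; have [e1 e2 _] := mgE e eE.
have c := cE _ _ e1 e2.
have nbT_in : forall u, u \in rest -> u \in nbT by move=> u ur; rewrite en inE ur orbT.
case: (boolP (e \in Fl)) => eF.
  case/mapP: (eF) => u ur ee.
  have /mapP[f] := nbT_in u ur; rewrite mem_filter => /andP[fi fT'] fu.
  have vu' : forall u', u' \in nbT -> u' != u -> adj (rem f T) v u'.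
    move=> u' u'n u'u; apply: (nb_adj (v := v) (T := T) u'n) => h hT hi hu'; apply: rem_mem => //.
    by apply/eqP => hf; rewrite -hu' hf -fu eqxx in u'u.
  have u0u : u0 != u by apply/eqP => h; rewrite h ur in u0r.
  have cl : forall g, g \in rem e (Fl ++ Rl) -> connect (adj (rem f T)) g.1 g.2.
    move=> g gr; have := mem_subseq (rem_subseq _ _) gr; rewrite mem_cat.
    case: (boolP (g \in Rl)) => gR; rewrite ?orbT ?orbF => gF.
      move: gR; rewrite mem_filter => /andP[gi gT]; apply: connect1.
      rewrite /adj -surjective_pairing rem_mem //.
      by apply/eqP => gf; rewrite gf fi in gi.
    case/mapP: gF => u' u'r ge.
    have [u'u|u'u] := eqVneq u' u.
      move: gr; rewrite rem_cat_l // ge u'u -ee mem_cat (mem_rem_uniqF _ fuq) /=.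
      by rewrite ee -u'u -ge (negbTE gR).
    rewrite ge /=; apply: (connect_trans (y := v)).
      by rewrite connectC; apply: connect1; apply: vu' => //; rewrite en mem_head.
    by apply: connect1; apply: vu' => //; apply: nbT_in.
  have cu : connect (adj (rem f T)) v u.
    apply: (connect_trans (y := u0)).
      by apply: connect1; apply: vu' => //; rewrite en mem_head.
    by move: (connect_edges cl c); rewrite ee.
  move/negP: (fT f fT'); apply.
  move: fi fu cu; rewrite /inc /oth; case: (eqVneq f.1 v) => [->|fv] /= => [_ ->//|/eqP -> ->].
  by rewrite connectC.
have eR : e \in Rl by move: eE; rewrite mem_cat (negbTE eF).
have eT : e \in T by move: eR; rewrite mem_filter => /andP[].
have ei : ~~ inc v e by move: eR; rewrite mem_filter => /andP[].
have vu' : forall u', u' \in nbT -> adj (rem e T) v u'.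
  move=> u' u'n; apply: (nb_adj (v := v) (T := T) u'n) => h hT hi hu'; apply: rem_mem => //.
  by apply/eqP => he; rewrite -he hi in ei.
have cl : forall g, g \in rem e (Fl ++ Rl) -> connect (adj (rem e T)) g.1 g.2.
  move=> g; rewrite rem_cat_r // mem_cat => /orP[/mapP[u' u'r ->]|gr] /=.
    apply: (connect_trans (y := v)).
      by rewrite connectC; apply: connect1; apply: vu'; rewrite en mem_head.
    by apply: connect1; apply: vu'; apply: nbT_in.
  apply: connect1; rewrite /adj -surjective_pairing.
  by rewrite (mem_subseq _ gr) //; apply: subseq_rem; apply: filter_subseq.
by move/negP: (fT e eT); apply; apply: connect_edges cl _ _ c.
Qed.


Lemma sum_eq1 S (x : V) : x \in S -> \sum_(w in S) (x == w) = 1.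
Proof.
move=> xS; rewrite (bigD1 x) //= eqxx big1 // => w /andP[_ wx].
by rewrite eq_sym (negbTE wx).
Qed.

Lemma deg_sum S E : is_multigraph S E -> \sum_(w in S) count (inc w) E = 2 * size E.
Proof.
elim: E => [|x E IH] mg /=; first by rewrite big1.
rewrite big_split /= IH; last by move=> e eE; apply: mg; rewrite inE eE orbT.
have [x1 x2 x12] := mg x (mem_head _ _).
have -> : \sum_(w in S) inc w x = \sum_(w in S) ((x.1 == w) + (x.2 == w)).
  apply: eq_bigr => w _; rewrite /inc.
  by case: (eqVneq x.1 w) => [h|h]; case: (eqVneq x.2 w) => [h'|h'] //;
    move: x12; rewrite h h' eqxx.
by rewrite big_split /= !sum_eq1 //; lia.
Qed.

Variable d : nat.

Lemma cc_size (s : seq (cedge V d)) : \sum_(i < d) size (colour_class s i) = size s.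
Proof.
elim: s => [|x s IH]; first by rewrite big1.
rewrite /= -IH -[(\sum_i _).+1]add1n.
have -> : \sum_(i < d) size (colour_class (x :: s) i) =
          \sum_(i < d) ((x.2 == i) + size (colour_class s i)).
  by apply: eq_bigr => i _; rewrite /colour_class /=; case: (x.2 == i).
by rewrite big_split /= (bigD1 x.2) //= eqxx big1 // => i /negbTE; rewrite eq_sym => ->.
Qed.

Lemma cc_cat (s1 s2 : seq (cedge V d)) i :
  colour_class (s1 ++ s2) i = colour_class s1 i ++ colour_class s2 i.
Proof. by rewrite /colour_class filter_cat map_cat. Qed.

Lemma cc_filter (p : pred (V * V)) (s : seq (cedge V d)) i :
  colour_class [seq e <- s | p e.1] i = [seq e <- colour_class s i | p e].
Proof.
rewrite /colour_class filter_map -!filter_predI; congr map.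
by apply: eq_filter => e /=; rewrite andbC.
Qed.

Lemma mg_of_cc S (s : seq (cedge V d)) :
  (forall i, is_multigraph S (colour_class s i)) -> is_multigraph S [seq e.1 | e <- s].
Proof.
move=> H x /mapP[e es ->]; apply: (H e.2); rewrite /colour_class.
by apply: map_f; rewrite mem_filter eqxx.
Qed.


Lemma ccFi (a : V) (s : seq V) (i k : 'I_d) :
  colour_class [seq ((a, u), i) | u <- s] k = if i == k then [seq (a, u) | u <- s] else [::].
Proof.
elim: s => [|u s IH] /=; first by case: ifP.
by move: IH; rewrite /colour_class /=; case: (i == k) => /= ->.
Qed.

End G.

Unset Implicit Arguments.
Set Strict Implicit.

Theorem proposition3p4 (d : nat) (hd : 1 <= d) (V : finType)
  (Vs' : {set V}) (E' : seq (cedge V d)) :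
  is_dtd Vs' E' -> ~ is_K1 Vs' E' ->
  exists (Vs : {set V}) (E : seq (cedge V d)) (j : nat),
    [/\ is_dtd Vs E, j <= d - 1 & dtree_ext j Vs E Vs' E'].
Proof.
move=> [mg' tr] nK.
pose T i := colour_class E' i.
have i0 : 'I_d := Ordinal hd.
have [_ [Sn0 _] _] := tr i0.
have n2 : 1 < #|Vs'|.
  rewrite ltnNge; apply/negP => le1; apply: nK; split.
    by apply/eqP; rewrite eqn_leq le1 card_gt0.
  case: E' mg' tr {T} => [//|e s] mg' _; have [h1 h2 h12] := mg' e.1 (mem_head _ _).
  by move/card_le1_eqP: le1 => /(_ _ _ h1 h2) h; move: h12; rewrite h eqxx.
have sT : forall i, (size (T i)).+1 <= #|Vs'|.
  move=> i; have [mgi _ _] := tr i.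
  apply: (forest_size (erefl (size (T i)))) => //; last exact: tree_forest (tr i).
  by move=> e /mgi [].
pose D w := \sum_(i < d) count (inc w) (T i).
have sumD : \sum_(w in Vs') D w = 2 * size E'.
  rewrite exchange_big /= -(cc_size E') big_distrr /=; apply: eq_bigr => i _.
  by apply: deg_sum; case: (tr i).
have sE' : size E' <= d * (#|Vs'| - 1).
  rewrite -cc_size; apply: (@leq_trans (\sum_(i < d) (#|Vs'| - 1))).
    by apply: leq_sum => i _; have := sT i; rewrite /T; lia.
  by rewrite sum_nat_const card_ord.
have [v vS Dv] : exists2 v, v \in Vs' & D v < 2 * d.
  case: (pickP [pred w in Vs' | D w < 2 * d]) => [w /andP[]|none]; first by exists w.
  have : \sum_(w in Vs') (2 * d) <= \sum_(w in Vs') D w.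
    apply: leq_sum => w wS; move: (none w); rewrite /= wS /=; lia.
  rewrite sum_nat_const sumD; move: sE' n2 hd; nia.
have S0 : Vs' :\ v != set0.
  by rewrite -card_gt0; move: n2; rewrite (cardsD1 v Vs') vS; lia.
have TD := fun i => tree_del vS S0 (tr i).
pose nbi i := nb v (T i).
pose Fi i := [seq ((head v (nbi i), u), i) | u <- behead (nbi i)].
pose F := \big[cat/[::]]_(i < d) Fi i.
pose N := [seq e <- E' | inc v e.1].
pose R := [seq e <- E' | ~~ inc v e.1].
have ccF : forall k, colour_class F k = [seq (head v (nbi k), u) | u <- behead (nbi k)].
  move=> k; rewrite /F (big_morph (fun s => colour_class s k) (fun s1 s2 => cc_cat s1 s2 k)
     (erefl : colour_class [::] k = [::])).
  under eq_bigr => i _ do rewrite ccFi.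
  by rewrite -(big_mkcond (fun i => i == k)) big_pred1_eq.
have ccN : forall i, colour_class N i = [seq e <- T i | inc v e] by move=> i; exact: cc_filter.
have ccR : forall i, colour_class R i = [seq e <- T i | ~~ inc v e].
  by move=> i; exact: (cc_filter (fun e => ~~ inc v e)).
have nbpos : forall i, 0 < size (nbi i).
  by move=> i; have [ne _ _] := TD i; rewrite lt0n size_eq0.
pose j := size F.
have hsF : j = \sum_(i < d) (size (nbi i)).-1.
  by rewrite /j -cc_size; apply: eq_bigr => i _; rewrite ccF size_map size_behead.
have hsN : size N = \sum_(i < d) size (nbi i).
  by rewrite -cc_size; apply: eq_bigr => i _; rewrite ccN size_map.
have NDv : size N = D v.
  by rewrite hsN; apply: eq_bigr => i _; rewrite size_map size_filter.
have Nj : size N = d + j.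
  have -> : d + j = \sum_(i < d) (size (nbi i)).-1 + \sum_(i < d) 1.
    by rewrite sum_nat_const card_ord muln1 hsF addnC.
  rewrite hsN -big_split /=.
  by apply: eq_bigr => i _; rewrite addn1 prednK.
have jd : j <= d - 1 by move: Dv; rewrite -NDv Nj; lia.
exists (Vs' :\ v), (F ++ R), j; split => //.
  split; last first.
    by move=> i; rewrite cc_cat ccF ccR; have [_ _ ?] := TD i.
  by apply: mg_of_cc => i; rewrite cc_cat ccF ccR; have [_ _ []] := TD i.
exists v, F, R, N; split.
- by rewrite setD11 (setD1K vS).
- split; first exact: perm_refl.
  have h := perm_filterC (fun e : cedge V d => inc v e.1) E'.
  by rewrite -h perm_catC.
- by [].
- move=> e; rewrite mem_filter => /andP[ie eE].
  have [h1 h2 h12] := mg' e.1 (map_f _ eE).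
  move: ie; rewrite /inc; case: (eqVneq e.1.1 v) => [ev|ev] /= => [_|e2v].
    left; split => //; rewrite in_setD1 h2 andbT.
    by apply/eqP => h; move: h12; rewrite ev h eqxx.
  by right; split => //; rewrite in_setD1 h1 ev.
- move=> i; split.
  + rewrite ccF size_map size_behead; apply: leq_trans jd.
    by rewrite hsF (bigD1 i) //= leq_addr.
  + by rewrite ccN ccF size_map size_behead prednK ?nbpos // /nbi /nb size_map.
  + move=> u /flatten_mapP[e]; rewrite ccF => /mapP[u' u'r ->].
    have innb : forall w, w \in nbi i -> w \in flatten [seq ends e | e <- colour_class N i].
      move=> w /mapP[h hf ->]; apply/flatten_mapP; exists h; rewrite ?ccN //.
      exact: oth_ends.
    have := nbpos i; case en: (nbi i) u'r => [|u0 rest] //= u'r _.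
    rewrite /ends /= !inE => /orP[/eqP ->|/eqP ->]; apply: innb; rewrite en inE ?eqxx //.
    by rewrite u'r orbT.
Qed.
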